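(* For all types $A$, $B$, $C$: if $A \equiv C$ and $C \sim B$, then $A \simeq B$.
   Context: Types and rows share one grammar: $A,B,C,\rho ::= X \mid \alpha \mid \star \mid \iota \mid A\to B \mid \forall X{:}K.\,A \mid [\rho] \mid \langle\rho\rangle \mid \cdot \mid \ell{:}A;\rho$, where $X$ ranges over type variables (bound by $\forall$), $\alpha$ over type names, $\star$ is the dynamic type (also serving as the dynamic row), $\iota$ over base types, $[\rho]$ and $\langle\rho\rangle$ are record and variant types, $\cdot$ is the empty row, $\ell$ ranges over labels, and $K\in\{\mathsf T,\mathsf R\}$ is a kind. Types are identified up to renaming of bound variables; $\mathit{ftv}(A)$ is the set of free type variables. Row matching $\rho \triangleright_\ell A,\rho'$ is defined by: $(\ell{:}A;\rho)\triangleright_\ell A,\rho$; if $\ell'\neq\ell$ and $\rho\triangleright_\ell A,\rho'$ then $(\ell'{:}B;\rho)\triangleright_\ell A,(\ell'{:}B;\rho')$; and $\star\triangleright_\ell \star,\star$. $\mathbf{QPoly}(A)$ holds iff $A$ is not of the form $\forall X{:}K.\,B$ and $\star$ occurs in $A$. Row concatenation $\rho_1\odot\rho_2$ is defined only when $\rho_1=\ell_1{:}A_1;\dots;\ell_n{:}A_n;\cdot$, and then equals $\ell_1{:}A_1;\dots;\ell_n{:}A_n;\rho_2$. $\mathit{dom}(\rho)$ is the set of labels in the top-level label prefix of $\rho$. A row $\rho$ ends with $\star$ if $\rho=\rho'\odot\star$ for some $\rho'$. Type equivalence $\equiv$ is the least equivalence relation that is a congruence for $\to$, $\forall X{:}K.\,-$,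 $[-]$, $\langle-\rangle$ and $\ell{:}-;-$, and contains $\ell{:}A;\ell'{:}B;\rho \equiv \ell'{:}B;\ell{:}A;\rho$ whenever $\ell\neq\ell'$. Consistency $\simeq$ is defined inductively: $A\simeq A$; $\star\simeq A$; $A\simeq\star$; $A_1\to A_2\simeq B_1\to B_2$ if $A_1\simeq B_1$ and $A_2\simeq B_2$; $\forall X{:}K.A\simeq\forall X{:}K.B$ if $A\simeq B$; $\forall X{:}K.A\simeq B$ if $\mathbf{QPoly}(B)$, $X\notin\mathit{ftv}(B)$ and $A\simeq B$; $A\simeq\forall X{:}K.B$ if $\mathbf{QPoly}(A)$, $X\notin\mathit{ftv}(A)$ and $A\simeq B$; $[\rho_1]\simeq[\rho_2]$ and $\langle\rho_1\rangle\simeq\langle\rho_2\rangle$ if $\rho_1\simeq\rho_2$; $\ell{:}A;\rho_1\simeq B$ if $B\triangleright_\ell B',\rho_2$, $A\simeq B'$ and $\rho_1\simeq\rho_2$; $A\simeq \ell{:}B;\rho_2$ if $A\triangleright_\ell A',\rho_1$, $A'\simeq B$ and $\rho_1\simeq\rho_2$. The relation $\sim$ is defined inductively by the same rules as $\simeq$ for reflexivity, $\star$ on either side, $\to$, $\forall$ (all three $\forall$ rules, with $\sim$ in place of $\simeq$), records and variants, together with: $\ell{:}A;\rho_1\sim\ell{:}B;\rho_2$ if $A\sim B$ and $\rho_1\sim\rho_2$; $\ell{:}A;\rho_1\sim\rho_2$ if $\ell\notin\mathit{dom}(\rho_2)$, $\rho_2$ ends with $\star$ and $\rho_1\sim\rho_2$;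 $\rho_1\sim\ell{:}B;\rho_2$ if $\ell\notin\mathit{dom}(\rho_1)$, $\rho_1$ ends with $\star$ and $\rho_1\sim\rho_2$. *)

(* Defs.v *)
(* Types/rows with de Bruijn indices for forall-bound type
   variables (so types are identified up to alpha-renaming). *)
From Stdlib Require Import List Arith.
Import ListNotations.

Definition label := nat.
Definition tyname := nat.
Definition basety := nat.

Inductive kind : Type := KT | KR.

Inductive ty : Type :=
  | TVar  : nat -> ty
  | TName : tyname -> ty
  | TDyn  : ty                   (* star: dynamic type / dynamic row *)
  | TBase : basety -> ty
  | TArr  : ty -> ty -> ty
  | TAll  : kind -> ty -> ty     (* forall X:K. A  (X = index 0 in body) *)
  | TRec  : ty -> ty
  | TVariant : ty -> ty
  | TNil  : ty
  | TLab  : label -> ty -> ty -> ty.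

Fixpoint lift (c : nat) (A : ty) : ty :=
  match A with
  | TVar n => if Nat.ltb n c then TVar n else TVar (S n)
  | TName a => TName a
  | TDyn => TDyn
  | TBase i => TBase i
  | TArr A B => TArr (lift c A) (lift c B)
  | TAll K A => TAll K (lift (S c) A)
  | TRec r => TRec (lift c r)
  | TVariant r => TVariant (lift c r)
  | TNil => TNil
  | TLab l A r => TLab l (lift c A) (lift c r)
  end.

Inductive row_match : ty -> label -> ty -> ty -> Prop :=
  | RM_head : forall l A rho, row_match (TLab l A rho) l A rho
  | RM_skip : forall l l' A B rho rho', l' <> l -> row_match rho l A rho' ->
      row_match (TLab l' B rho) l A (TLab l' B rho')
  | RM_dyn  : forall l, row_match TDyn l TDyn TDyn.

Fixpoint star_occurs (A : ty) : bool :=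
  match A with
  | TDyn => true
  | TArr A B => star_occurs A || star_occurs B
  | TAll _ A => star_occurs A
  | TRec r | TVariant r => star_occurs r
  | TLab _ A r => star_occurs A || star_occurs r
  | _ => false
  end.

Definition is_forall (A : ty) : Prop :=
  match A with TAll _ _ => True | _ => False end.

Definition QPoly (A : ty) : Prop := ~ is_forall A /\ star_occurs A = true.

(* rho1 (.) rho2 where rho1 = l1:A1;...;ln:An;. is given by its label list *)
Fixpoint row_concat (ls : list (label * ty)) (rho2 : ty) : ty :=
  match ls with
  | [] => rho2
  | (l, A) :: ls' => TLab l A (row_concat ls' rho2)
  end.

Definition ends_with_star (rho : ty) : Prop :=
  exists ls, rho = row_concat ls TDyn.

Fixpoint dom (rho : ty) : list label :=
  match rho with
  | TLab l _ r => l :: dom r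
  | _ => []
  end.

Inductive ty_equiv : ty -> ty -> Prop :=
  | TE_refl : forall A, ty_equiv A A
  | TE_sym : forall A B, ty_equiv A B -> ty_equiv B A
  | TE_trans : forall A B C, ty_equiv A B -> ty_equiv B C -> ty_equiv A C
  | TE_arr : forall A1 A2 B1 B2, ty_equiv A1 B1 -> ty_equiv A2 B2 ->
      ty_equiv (TArr A1 A2) (TArr B1 B2)
  | TE_all : forall K A B, ty_equiv A B -> ty_equiv (TAll K A) (TAll K B)
  | TE_rec : forall r1 r2, ty_equiv r1 r2 -> ty_equiv (TRec r1) (TRec r2)
  | TE_variant : forall r1 r2, ty_equiv r1 r2 ->
      ty_equiv (TVariant r1) (TVariant r2)
  | TE_lab : forall l A B r1 r2, ty_equiv A B -> ty_equiv r1 r2 ->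
      ty_equiv (TLab l A r1) (TLab l B r2)
  | TE_swap : forall l l' A B rho, l <> l' ->
      ty_equiv (TLab l A (TLab l' B rho)) (TLab l' B (TLab l A rho)).

(* Consistency (the "X notin ftv(B)" side condition is rendered by lifting
   B under the binder) *)
Inductive consistent : ty -> ty -> Prop :=
  | C_refl : forall A, consistent A A
  | C_dynL : forall A, consistent TDyn A
  | C_dynR : forall A, consistent A TDyn
  | C_arr : forall A1 A2 B1 B2, consistent A1 B1 -> consistent A2 B2 ->
      consistent (TArr A1 A2) (TArr B1 B2)
  | C_all : forall K A B, consistent A B -> consistent (TAll K A) (TAll K B)
  | C_allL : forall K A B, QPoly B -> consistent A (lift 0 B) ->
      consistent (TAll K A) B
  | C_allR : forall K A B, QPoly A -> consistent (lift 0 A) B ->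
      consistent A (TAll K B)
  | C_rec : forall r1 r2, consistent r1 r2 -> consistent (TRec r1) (TRec r2)
  | C_variant : forall r1 r2, consistent r1 r2 ->
      consistent (TVariant r1) (TVariant r2)
  | C_labL : forall l A rho1 B B' rho2, row_match B l B' rho2 ->
      consistent A B' -> consistent rho1 rho2 -> consistent (TLab l A rho1) B
  | C_labR : forall l A A' rho1 B rho2, row_match A l A' rho1 ->
      consistent A' B -> consistent rho1 rho2 -> consistent A (TLab l B rho2).

Inductive sim : ty -> ty -> Prop :=
  | S_refl : forall A, sim A A
  | S_dynL : forall A, sim TDyn A
  | S_dynR : forall A, sim A TDyn
  | S_arr : forall A1 A2 B1 B2, sim A1 B1 -> sim A2 B2 ->
      sim (TArr A1 A2) (TArr B1 B2)
  | S_all : forall K A B, sim A B -> sim (TAll K A) (TAll K B)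
  | S_allL : forall K A B, QPoly B -> sim A (lift 0 B) -> sim (TAll K A) B
  | S_allR : forall K A B, QPoly A -> sim (lift 0 A) B -> sim A (TAll K B)
  | S_rec : forall r1 r2, sim r1 r2 -> sim (TRec r1) (TRec r2)
  | S_variant : forall r1 r2, sim r1 r2 -> sim (TVariant r1) (TVariant r2)
  | S_lab : forall l A B rho1 rho2, sim A B -> sim rho1 rho2 ->
      sim (TLab l A rho1) (TLab l B rho2)
  | S_labL : forall l A rho1 rho2, ~ In l (dom rho2) -> ends_with_star rho2 ->
      sim rho1 rho2 -> sim (TLab l A rho1) rho2
  | S_labR : forall l B rho1 rho2, ~ In l (dom rho1) -> ends_with_star rho1 ->
      sim rho1 rho2 -> sim rho1 (TLab l B rho2).

(* Main.v *)
Require Import Defs.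
From Stdlib Require Import List Arith Lia.
Import ListNotations.

Fixpoint tsize (A : ty) : nat :=
  match A with
  | TArr a b => S (tsize a + tsize b)
  | TAll _ a => S (tsize a)
  | TRec r | TVariant r => S (tsize r)
  | TLab _ a r => S (tsize a + tsize r)
  | _ => 1
  end.

Definition shape (A B : ty) : Prop :=
  match A, B with
  | TArr a1 a2, TArr b1 b2 => ty_equiv a1 b1 /\ ty_equiv a2 b2
  | TAll k a, TAll k' b => k = k' /\ ty_equiv a b
  | TRec a, TRec b => ty_equiv a b
  | TVariant a, TVariant b => ty_equiv a b
  | TLab _ _ _, TLab _ _ _ => True
  | _, _ => A = B
  end.

Lemma shape_equiv : forall A B, ty_equiv A B -> shape A B.
Proof.
  induction 1; simpl; auto.
  - destruct A; simpl; auto using TE_refl.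
  - destruct A, B; simpl in *; intuition (try congruence; eauto using TE_sym).
  - destruct A, B; simpl in *; try discriminate; try contradiction;
    destruct C; simpl in *; try discriminate; try contradiction;
    intuition (try congruence; eauto using TE_trans).
Qed.

Lemma star_equiv : forall A B, ty_equiv A B -> star_occurs A = star_occurs B.
Proof.
  induction 1; simpl; try congruence.
  destruct (star_occurs A), (star_occurs B), (star_occurs rho); reflexivity.
Qed.

Lemma QPoly_equiv : forall A B, ty_equiv A B -> QPoly B -> QPoly A.
Proof.
  intros A B H [H1 H2]. split.
  - apply shape_equiv in H. destruct A, B; simpl in *; try congruence; tauto.
  - rewrite (star_equiv _ _ H); auto.
Qed.

Lemma lift_equiv : forall A B, ty_equiv A B -> forall c, ty_equiv (lift c A) (lift c B).
Proof.
  induction 1; intros; simpl; try solve [constructor; auto].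
  - eapply TE_trans; eauto.
Qed.

Lemma row_match_size : forall A l X r, row_match A l X r -> tsize r <= tsize A.
Proof. induction 1; simpl; lia. Qed.

Lemma row_match_star : forall ls l, ~ In l (dom (row_concat ls TDyn)) ->
  row_match (row_concat ls TDyn) l TDyn (row_concat ls TDyn).
Proof.
  induction ls as [|[m X] ls IH]; intros l H; simpl in *.
  - constructor.
  - constructor; auto.
Qed.

Lemma RT : forall A B, ty_equiv A B ->
 (forall l B' rB, row_match B l B' rB -> exists A' rA,
    row_match A l A' rA /\ ty_equiv A' B' /\ ty_equiv rA rB) /\
 (forall l A' rA, row_match A l A' rA -> exists B' rB,
    row_match B l B' rB /\ ty_equiv A' B' /\ ty_equiv rA rB).
Proof.
  induction 1.
  - split; intros; do 2 eexists; (split; [eauto | split; apply TE_refl]).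
  - destruct IHty_equiv as [H1 H2]; split; intros.
    + destruct (H2 _ _ _ H0) as (x & y & ? & ? & ?).
      exists x, y; split; [auto | split; apply TE_sym; auto].
    + destruct (H1 _ _ _ H0) as (x & y & ? & ? & ?).
      exists x, y; split; [auto | split; apply TE_sym; auto].
  - destruct IHty_equiv1 as [H1 H2]; destruct IHty_equiv2 as [H3 H4]; split; intros.
    + destruct (H3 _ _ _ H5) as (x & y & ? & ? & ?).
      destruct (H1 _ _ _ H6) as (x' & y' & ? & ? & ?).
      exists x', y'; split; [auto | split; eapply TE_trans; eauto].
    + destruct (H2 _ _ _ H5) as (x & y & ? & ? & ?).
      destruct (H4 _ _ _ H6) as (x' & y' & ? & ? & ?).
      exists x', y'; split; [auto | split; eapply TE_trans; eauto].
  - split; intros ? ? ? Hm; inversion Hm.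
  - split; intros ? ? ? Hm; inversion Hm.
  - split; intros ? ? ? Hm; inversion Hm.
  - split; intros ? ? ? Hm; inversion Hm.
  - destruct IHty_equiv2 as [H1 H2].
    split; intros l0 ? ? Hm; inversion Hm; subst.
    + exists A, r1; split; [constructor | split; auto].
    + destruct (H1 _ _ _ ltac:(eassumption)) as (x & y & ? & ? & ?).
      exists x, (TLab l A y); split; [constructor; auto | split; [auto | apply TE_lab; auto using TE_refl]].
    + exists B, r2; split; [constructor | split; auto].
    + destruct (H2 _ _ _ ltac:(eassumption)) as (x & y & ? & ? & ?).
      exists x, (TLab l B y); split; [constructor; auto | split; [auto | apply TE_lab; auto using TE_refl]].
  - split; intros m ? ? Hm; inversion Hm; subst;
    try match goal with Hx : row_match (TLab _ _ _) _ _ _ |- _ => inversion Hx; subst end;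
    do 2 eexists; (split; [ solve [repeat (apply RM_head || (apply RM_skip; [congruence|])) ; eassumption]
      | split; solve [apply TE_refl | apply TE_swap; congruence] ]).
Qed.

Lemma RC : forall t l B' t', row_match t l B' t' ->
  forall m Z t3, l <> m -> row_match t' m Z t3 ->
  exists t4, row_match t m Z t4 /\ row_match t4 l B' t3.
Proof.
  induction 1; intros m Z t3 Hlm H2.
  - exists (TLab l A t3); split; [constructor; auto | constructor].
  - inversion H2; subst.
    + exists rho; split; [constructor | auto].
    + destruct (IHrow_match _ _ _ Hlm ltac:(eassumption)) as (t4 & ? & ?).
      exists (TLab l' B t4); split; constructor; auto.
  - inversion H2; subst. exists TDyn; split; constructor.
Qed.

Lemma LabL' : forall n A B, tsize A + tsize B < n ->
  forall l A' rA B' rB, row_match A l A' rA -> row_match B l B' rB ->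
  consistent A' B' -> consistent rA rB -> consistent A B.
Proof.
  induction n; intros A B Hs l A' rA B' rB HA HB H1 H2; [lia|].
  inversion HA; subst.
  - eapply C_labL; eauto.
  - rename l' into m, B0 into Y, rho into s, rho' into s', H into Hml, H0 into Hs0.
    inversion HB; subst.
    + eapply C_labR; eauto.
    + rename l' into n0, B0 into Z, rho into t, rho' into t'.
      match goal with Hx : row_match t l B' t' |- _ => rename Hx into Ht0 end.
      pose proof (row_match_size _ _ _ _ Hs0) as Sz1.
      pose proof (row_match_size _ _ _ _ Ht0) as Sz2.
      simpl in Hs.
      inversion H2; subst.
      * eapply C_labL; [apply RM_head | apply C_refl |].
        eapply IHn; [| eassumption | eassumption | eassumption | apply C_refl]. simpl; lia.
      * match goal with Hx : row_match (TLab _ _ t') m _ _ |- _ => inversion Hx; subst end.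
        -- eapply C_labL; [apply RM_head | eassumption |].
           eapply IHn; [| eassumption | eassumption | eassumption | eassumption]. simpl; lia.
        -- destruct (RC _ _ _ _ Ht0 m _ _ ltac:(congruence) ltac:(eassumption)) as (t4 & Ht4 & Ht4').
           pose proof (row_match_size _ _ _ _ Ht4).
           eapply C_labL; [apply RM_skip; [congruence | eassumption] | eassumption |].
           eapply IHn; [| eassumption | apply RM_skip; [congruence | eassumption] | eassumption | eassumption].
           simpl; lia.
      * match goal with Hx : row_match (TLab _ _ s') n0 _ _ |- _ => inversion Hx; subst end.
        -- eapply C_labR; [apply RM_head | eassumption |].
           eapply IHn; [| eassumption | eassumption | eassumption | eassumption]. simpl; lia.
        -- destruct (RC _ _ _ _ Hs0 n0 _ _ ltac:(congruence) ltac:(eassumption)) as (t4 & Ht4 & Ht4').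
           pose proof (row_match_size _ _ _ _ Ht4).
           eapply C_labR; [apply RM_skip; [congruence | eassumption] | eassumption |].
           apply (IHn (TLab m Y t4) t ltac:(simpl; lia) l A' (TLab m Y rho') B' t');
             [apply RM_skip; [congruence | eassumption] | eassumption | eassumption | eassumption].
    + apply C_dynR.
  - apply C_dynL.
Qed.

Lemma L1 : forall A B, ty_equiv A B -> consistent A B.
Proof.
  induction A; intros B0 H; pose proof (shape_equiv _ _ H) as Hs;
    try (destruct B0; simpl in Hs; try discriminate; try contradiction; (try rewrite Hs); apply C_refl).
  - destruct B0; simpl in Hs; try discriminate; try contradiction.
    destruct Hs; apply C_arr; auto.
  - destruct B0; simpl in Hs; try discriminate; try contradiction.
    destruct Hs; subst; apply C_all; auto.
  - destruct B0; simpl in Hs; try discriminate; try contradiction. apply C_rec; auto.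
  - destruct B0; simpl in Hs; try discriminate; try contradiction. apply C_variant; auto.
  - destruct (RT _ _ H) as [_ H2].
    destruct (H2 l A1 A2 (RM_head _ _ _)) as (x & y & ? & ? & ?).
    eapply C_labL; eauto.
Qed.

Lemma equiv_dyn : forall A, ty_equiv A TDyn -> A = TDyn.
Proof.
  intros A H; apply shape_equiv in H; destruct A; simpl in H; try congruence; contradiction.
Qed.

Lemma M2 : forall C D, consistent C D -> forall A B, ty_equiv A C -> ty_equiv B D -> consistent A B.
Proof.
  induction 1; intros A0 B0 HA HB.
  - apply L1. eapply TE_trans; [eassumption | apply TE_sym; eassumption].
  - rewrite (equiv_dyn _ HA). apply C_dynL.
  - rewrite (equiv_dyn _ HB). apply C_dynR.
  - apply shape_equiv in HA; apply shape_equiv in HB.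
    destruct A0; simpl in HA; try discriminate; try contradiction.
    destruct B0; simpl in HB; try discriminate; try contradiction.
    destruct HA, HB; apply C_arr; auto.
  - apply shape_equiv in HA; apply shape_equiv in HB.
    destruct A0; simpl in HA; try discriminate; try contradiction.
    destruct B0; simpl in HB; try discriminate; try contradiction.
    destruct HA, HB; subst; apply C_all; auto.
  - pose proof (shape_equiv _ _ HA) as HA'.
    destruct A0; simpl in HA'; try discriminate; try contradiction.
    destruct HA'; subst. apply C_allL.
    + eapply QPoly_equiv; eauto.
    + apply IHconsistent; auto. apply lift_equiv; auto.
  - pose proof (shape_equiv _ _ HB) as HB'.
    destruct B0; simpl in HB'; try discriminate; try contradiction.
    destruct HB'; subst. apply C_allR.
    + eapply QPoly_equiv; eauto.
    + apply IHconsistent; auto. apply lift_equiv; auto.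
  - apply shape_equiv in HA; apply shape_equiv in HB.
    destruct A0; simpl in HA; try discriminate; try contradiction.
    destruct B0; simpl in HB; try discriminate; try contradiction.
    apply C_rec; auto.
  - apply shape_equiv in HA; apply shape_equiv in HB.
    destruct A0; simpl in HA; try discriminate; try contradiction.
    destruct B0; simpl in HB; try discriminate; try contradiction.
    apply C_variant; auto.
  - destruct (RT _ _ HA) as [Ha _].
    destruct (Ha l A rho1 (RM_head _ _ _)) as (x & y & ? & ? & ?).
    destruct (RT _ _ HB) as [Hb _].
    destruct (Hb _ _ _ H) as (x' & y' & ? & ? & ?).
    eapply (LabL' (S (tsize A0 + tsize B0))); [lia | eassumption | eassumption | |].
    + apply IHconsistent1; auto.
    + apply IHconsistent2; auto.
  - destruct (RT _ _ HA) as [Ha _].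
    destruct (Ha _ _ _ H) as (x & y & ? & ? & ?).
    destruct (RT _ _ HB) as [Hb _].
    destruct (Hb l B rho2 (RM_head _ _ _)) as (x' & y' & ? & ? & ?).
    eapply (LabL' (S (tsize A0 + tsize B0))); [lia | eassumption | eassumption | |].
    + apply IHconsistent1; auto.
    + apply IHconsistent2; auto.
Qed.

Lemma sim_cons : forall A B, sim A B -> consistent A B.
Proof.
  induction 1; try solve [constructor; auto].
  - eapply C_labL; [apply RM_head | auto | auto].
  - destruct H0 as [ls ->]. eapply C_labL; [apply row_match_star; auto | apply C_dynR | auto].
  - destruct H0 as [ls ->]. eapply C_labR; [apply row_match_star; auto | apply C_dynL | auto].
Qed.

Theorem mainTheorem3 : forall A B C : ty,
  ty_equiv A C -> sim C B -> consistent A B.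
Proof.
  intros A B C H1 H2. eapply M2; [apply sim_cons; eassumption | eassumption | apply TE_refl].
Qed.
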